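(* Let $d\ge2$ be an integer, $D_1,\dots,D_d$ real constants, $D=\sum_iD_i$. Define $m:[-D^2/d,\pi^2/d)\to[0,\infty)$ as follows (with $\mu=-\lambda$ when $\lambda<0$): $$m(\lambda)=\begin{cases}0 & \text{if } \lambda=-D^2/d<0,\\[2pt] \left|\ln\left(\dfrac{\big(\frac{e^{\sqrt{d\mu}}}{\sqrt{-C_-}}+1\big)\big(-\frac{1}{\sqrt{-C_-}}+1\big)}{\big(1-\frac{e^{\sqrt{d\mu}}}{\sqrt{-C_-}}\big)\big(1+\frac{1}{\sqrt{-C_-}}\big)}\right)\right| & \text{if } -D^2/d<\lambda<0,\\[2pt] |D| & \text{if } \lambda=0,\\[2pt] \left|\ln\dfrac{\tan(C_++\sqrt{d\lambda})+\sec(C_++\sqrt{d\lambda})}{\tan(C_+)+\sec(C_+)}\right| & \text{if } 0<\lambda<\pi^2/d,\end{cases}$$ where $C_-=\dfrac{e^{2\sqrt{d\mu}}-e^{D+\sqrt{d\mu}}}{e^{D+\sqrt{d\mu}}-1}$ and $C_+=\arctan\left(\dfrac{\cos(\sqrt{d\lambda})-e^D}{\sin(\sqrt{d\lambda})}\right)$. For $\lambda\in[-D^2/d,\pi^2/d)$, let $L=(L_1,\dots,L_d)\in C^1([0,1];\mathbb{R}^d)$ be the unique solution of $$L_i'=-\Big(\sum_{k=1}^dL_k\Big)L_i-\lambda\ \text{ on }[0,1],\qquad\int_0^1L_i(r)\,dr=D_i\qquad(i=1,\dots,d).$$ Then $L$ satisfies $$(d-1)\lambda=\sum_{i=1}^dL_i(0)^2-\Big(\sum_{i=1}^dL_i(0)\Big)^2$$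 if and only if $$m(\lambda)=\sqrt{\frac{d}{d-1}\sum_{i=1}^d\Big(D_i-\frac{D}{d}\Big)^2}.$$
   Context: For $-D^2/d<\lambda<0$ one has $C_-<0$, so $\sqrt{-C_-}$ is defined. *)

(* Defs.v *)
From Stdlib Require Import Reals Lra.
From Coquelicot Require Import Coquelicot.
Open Scope R_scope.

(* rsum n f = f 0 + ... + f (n-1)   (indices 0..n-1 stand for 1..n) *)
Fixpoint rsum (n : nat) (f : nat -> R) : R :=
  match n with
  | O => 0
  | S k => rsum k f + f k
  end.

Definition sec (x : R) : R := / cos x.

Definition Cminus (d : nat) (D mu : R) : R :=
  (exp (2 * sqrt (INR d * mu)) - exp (D + sqrt (INR d * mu)))
  / (exp (D + sqrt (INR d * mu)) - 1).

Definition Cplus (d : nat) (D lam : R) : R :=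
  atan ((cos (sqrt (INR d * lam)) - exp D) / sin (sqrt (INR d * lam))).

Definition mfun (d : nat) (D lam : R) : R :=
  if Rlt_dec lam 0 then
    if Req_EM_T lam (- D ^ 2 / INR d) then 0
    else
      let mu := - lam in
      let E := exp (sqrt (INR d * mu)) in
      let s := sqrt (- Cminus d D mu) in
      Rabs (ln (((E / s + 1) * (- (1 / s) + 1)) / ((1 - E / s) * (1 + 1 / s))))
  else if Req_EM_T lam 0 then Rabs D
  else
    let c := Cplus d D lam in
    let a := c + sqrt (INR d * lam) in
    Rabs (ln ((tan a + sec a) / (tan c + sec c))).

(* Main.v *)
Require Import Defs.
From Stdlib Require Import Reals Lra Lia.
From Coquelicot Require Import Coquelicot.
Open Scope R_scope.


Definition clamp (x:R) := Rmax 0 (Rmin 1 x).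
Lemma clamp_in x : 0 <= clamp x <= 1.
Proof. unfold clamp, Rmax, Rmin; repeat destruct Rle_dec; lra. Qed.
Lemma clamp_id x : 0 <= x <= 1 -> clamp x = x.
Proof. unfold clamp, Rmax, Rmin; repeat destruct Rle_dec; lra. Qed.
Lemma clamp_lip x y : Rabs (clamp x - clamp y) <= Rabs (x - y).
Proof. unfold clamp, Rmax, Rmin; repeat destruct Rle_dec;
 unfold Rabs; repeat destruct Rcase_abs; lra. Qed.
Lemma continuous_clamp x : continuous clamp x.
Proof.
  apply filterlim_locally. intros eps. exists eps. intros y Hy.
  change (Rabs (clamp y - clamp x) < eps).
  change (Rabs (y - x) < eps) in Hy.
  eapply Rle_lt_trans; [apply clamp_lip|exact Hy].
Qed.

Definition I01 := fun x => 0 <= x <= 1.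
Definition C01 (f : R -> R) := forall x, continuous (fun y => f (clamp y)) x.

Lemma C01_of_within f :
  (forall r, 0 <= r <= 1 -> filterlim f (within (fun x => 0 <= x <= 1) (locally r)) (locally (f r))) ->
  C01 f.
Proof.
  intros H x. unfold continuous.
  eapply filterlim_comp; [|apply H, clamp_in].
  intros P HP. unfold within in HP.
  assert (Hc := continuous_clamp x _ HP).
  unfold filtermap in *. simpl in Hc.
  eapply filter_imp; [|exact Hc]. intros y Hy. apply Hy, clamp_in.
Qed.

Lemma C01_plus f g : C01 f -> C01 g -> C01 (fun r => f r + g r).
Proof. intros Hf Hg x. apply (continuous_plus (fun y => f (clamp y)) (fun y => g (clamp y))); auto. Qed.
Lemma C01_mult f g : C01 f -> C01 g -> C01 (fun r => f r * g r).
Proof. intros Hf Hg x. apply (continuous_mult (fun y => f (clamp y)) (fun y => g (clamp y))); auto. Qed.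
Lemma C01_const c : C01 (fun _ => c).
Proof. intros x. apply continuous_const. Qed.
Lemma C01_comp f g : C01 f -> (forall r, 0 <= r <= 1 -> continuous g (f r)) -> C01 (fun r => g (f r)).
Proof. intros Hf Hg x. apply (continuous_comp (fun y => f (clamp y)) g); auto. apply Hg, clamp_in. Qed.
Lemma C01_opp f : C01 f -> C01 (fun r => - f r).
Proof. intros Hf x. apply (continuous_opp (fun y => f (clamp y))); auto. Qed.
Lemma C01_minus f g : C01 f -> C01 g -> C01 (fun r => f r - g r).
Proof. intros Hf Hg. apply C01_plus; auto. apply C01_opp; auto. Qed.
Lemma C01_glob f : (forall x, continuous f x) -> C01 f.
Proof. intros H x. apply (continuous_comp clamp f). apply continuous_clamp. apply H. Qed.

Lemma locally_interior x P : 0 < x < 1 -> (forall y, 0 < y < 1 -> P y) -> locally x P.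
Proof.
  intros Hx HP. assert (Hd : 0 < Rmin x (1 - x)) by (apply Rmin_glb_lt; lra).
  exists (mkposreal _ Hd). intros y Hy. apply HP.
  change (Rabs (y - x) < Rmin x (1 - x)) in Hy.
  assert (h1 := Rmin_l x (1-x)). assert (h2 := Rmin_r x (1-x)).
  unfold Rabs in Hy; destruct Rcase_abs in Hy; lra.
Qed.

Lemma derive_clamp (F : R -> R) x (l:R) : 0 < x < 1 -> is_derive F x l -> is_derive (fun y => F (clamp y)) x l.
Proof.
  intros Hx H. apply (is_derive_ext_loc F); auto.
  apply locally_interior; auto. intros y Hy. rewrite clamp_id; lra.
Qed.

Lemma FTC (F f : R -> R) a b : 0 <= a -> a < b -> b <= 1 -> C01 F -> C01 f ->
  (forall x, a < x < b -> is_derive F x (f x)) -> is_RInt f a b (F b - F a).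
Proof.
  intros Ha Hab Hb HF Hf HD.
  set (ft := fun y => f (clamp y)). set (Ft := fun y => F (clamp y)).
  assert (Hex : forall u v, ex_RInt ft u v) by (intros; apply (ex_RInt_continuous (V:=R_CompleteNormedModule)); intros; apply Hf).
  set (G := fun x => RInt ft a x).
  assert (HG : forall x, is_derive G x (ft x)).
  { intros x. apply (is_derive_RInt ft G a). apply filter_forall. intros; apply (RInt_correct (V:=R_CompleteNormedModule)), Hex. apply Hf. }
  set (H := fun x => Ft x - G x).
  destruct (MVT_gen H a b (fun _ => 0)) as [c [_ Hc]].
  - intros x Hx. rewrite Rmin_left, Rmax_right in Hx by lra.
    unfold H. replace 0 with (f x - ft x).
    apply (is_derive_minus Ft G). apply derive_clamp. lra. apply HD; lra. apply HG.
    unfold ft; rewrite clamp_id; lra.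
  - intros x _. apply continuity_pt_filterlim. unfold H.
    apply (continuous_minus Ft G). apply HF. apply ex_derive_continuous. eexists; apply HG.
  - unfold H, G in Hc. rewrite RInt_point in Hc.
    apply (is_RInt_ext ft). intros x Hx. rewrite Rmin_left, Rmax_right in Hx by lra.
    unfold ft; rewrite clamp_id; lra.
    replace (F b - F a) with (RInt ft a b). apply (RInt_correct (V:=R_CompleteNormedModule)), Hex.
    unfold Ft in Hc. rewrite (clamp_id a), (clamp_id b) in Hc by lra.
    change zero with 0 in Hc. lra.
Qed.

Lemma const01 (F : R -> R) : C01 F -> (forall x, 0 < x < 1 -> is_derive F x 0) ->
  forall r, 0 <= r <= 1 -> F r = F 0.
Proof.
  intros HF HD r Hr. destruct (Req_dec r 0) as [->|Hr0]; auto.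
  assert (Hi := FTC F (fun _ => 0) 0 r ltac:(lra) ltac:(lra) ltac:(lra) HF (C01_const 0)
    ltac:(intros; apply HD; lra)).
  assert (Hc := is_RInt_const 0 r 0). apply (is_RInt_unique (V:=R_CompleteNormedModule)) in Hi. apply (is_RInt_unique (V:=R_CompleteNormedModule)) in Hc.
  rewrite Hi in Hc. change (scal (r - 0) 0) with ((r-0)*0) in Hc. lra.
Qed.

Lemma deriv_eq (f : R -> R) (x l l' : R) : is_derive f x l -> l = l' -> is_derive f x l'.
Proof. intros H ->; exact H. Qed.

Lemma C01_cont_pt S : C01 S -> continuity (fun y => S (clamp y)).
Proof. intros H x. apply continuity_pt_filterlim, H. Qed.

Lemma sign01 S : C01 S -> (forall r, 0 <= r <= 1 -> S r <> 0) ->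
  forall r, 0 <= r <= 1 -> 0 < S 0 * S r.
Proof.
  intros HC HN r Hr.
  destruct (Rlt_dec 0 (S 0 * S r)) as [h|h]; auto. exfalso.
  assert (h0 := HN 0 ltac:(lra)). assert (h1 := HN r Hr).
  assert (Hneg : S 0 * S r < 0).
  { destruct (Rle_lt_or_eq_dec _ _ (Rnot_lt_le _ _ h)) as [h'|h']; auto.
    apply Rmult_integral in h'. tauto. }
  destruct (IVT_gen (fun y => S (clamp y)) 0 r 0 (C01_cont_pt S HC)) as [x [Hx Hx0]].
  - rewrite (clamp_id 0), (clamp_id r) by lra.
    unfold Rmin, Rmax; destruct Rle_dec; nra.
  - apply (HN (clamp x)); auto. apply clamp_in.
Qed.
Lemma rsum_ext n f g : (forall i, (i < n)%nat -> f i = g i) -> rsum n f = rsum n g.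
Proof. induction n; simpl; intros H; auto. f_equal. apply IHn; intros; apply H; lia. apply H; lia. Qed.
Lemma rsum_plus n f g : rsum n (fun i => f i + g i) = rsum n f + rsum n g.
Proof. induction n; simpl; auto. lra. rewrite IHn; lra. Qed.
Lemma rsum_scal n c f : rsum n (fun i => c * f i) = c * rsum n f.
Proof. induction n; simpl; auto. lra. rewrite IHn; lra. Qed.
Lemma rsum_const n c : rsum n (fun _ => c) = INR n * c.
Proof. induction n; simpl rsum; auto. simpl; lra. rewrite IHn. rewrite S_INR. lra. Qed.
Lemma rsum_nonneg n f : (forall i, (i < n)%nat -> 0 <= f i) -> 0 <= rsum n f.
Proof. induction n; simpl; intros H. lra. assert (h := H n ltac:(lia)).
  assert (0 <= rsum n f) by (apply IHn; intros; apply H; lia). lra. Qed.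

Lemma is_derive_rsum n (f : nat -> R -> R) f' x :
  (forall i, (i < n)%nat -> is_derive (f i) x (f' i)) ->
  is_derive (fun r => rsum n (fun i => f i r)) x (rsum n f').
Proof.
  induction n; simpl; intros H.
  - apply (is_derive_const 0).
  - apply (is_derive_plus (fun r => rsum n (fun i => f i r)) (f n)).
    apply IHn; intros; apply H; lia. apply H; lia.
Qed.

Lemma is_RInt_rsum n (f : nat -> R -> R) Ds :
  (forall i, (i < n)%nat -> is_RInt (f i) 0 1 (Ds i)) ->
  is_RInt (fun r => rsum n (fun i => f i r)) 0 1 (rsum n Ds).
Proof.
  induction n; simpl; intros H.
  - assert (h := is_RInt_const 0 1 0). change (scal (1-0) 0) with ((1-0)*0) in h.
    replace ((1-0)*0) with 0 in h by ring. exact h.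
  - apply (is_RInt_plus (fun r => rsum n (fun i => f i r)) (f n)).
    apply IHn; intros; apply H; lia. apply H; lia.
Qed.

Lemma C01_rsum n (f : nat -> R -> R) :
  (forall i, (i < n)%nat -> C01 (f i)) -> C01 (fun r => rsum n (fun i => f i r)).
Proof.
  induction n; simpl; intros H. apply C01_const.
  apply C01_plus. apply IHn; intros; apply H; lia. apply H; lia.
Qed.

Definition Ifun (S : R -> R) x := RInt (fun y => S (clamp y)) 0 x.

Lemma Ifun_derive S : C01 S -> forall x, is_derive (Ifun S) x (S (clamp x)).
Proof.
  intros HC x. apply (is_derive_RInt (fun y => S (clamp y)) (Ifun S) 0).
  apply filter_forall. intros; apply (RInt_correct (V:=R_CompleteNormedModule)).
  apply (ex_RInt_continuous (V:=R_CompleteNormedModule)); intros; apply HC.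
  apply HC.
Qed.

Lemma Ifun_0 S : Ifun S 0 = 0.
Proof. unfold Ifun. rewrite RInt_point. reflexivity. Qed.

Lemma Ifun_1 S D : C01 S -> is_RInt S 0 1 D -> Ifun S 1 = D.
Proof.
  intros HC HI. unfold Ifun. apply (is_RInt_unique (V:=R_CompleteNormedModule)).
  apply (is_RInt_ext S). intros x Hx. rewrite Rmin_left, Rmax_right in Hx by lra.
  rewrite clamp_id; lra. exact HI.
Qed.

Lemma C01_Ifun S : C01 S -> C01 (Ifun S).
Proof. intros HC. apply C01_glob. intros x. apply (ex_derive_continuous (Ifun S)). eexists; apply Ifun_derive, HC. Qed.

Lemma lin_sol S Y a : C01 S -> C01 Y ->
  (forall x, 0 < x < 1 -> is_derive Y x (- a * S x * Y x)) ->
  forall r, 0 <= r <= 1 -> Y r = Y 0 * exp (- a * Ifun S r).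
Proof.
  intros HS HY HD r Hr.
  assert (H : Y r * exp (a * Ifun S r) = Y 0 * exp (a * Ifun S 0)).
  2:{ rewrite Ifun_0 in H. rewrite Rmult_0_r, exp_0, Rmult_1_r in H. rewrite <- H.
    rewrite Rmult_assoc, <- exp_plus. replace (a * Ifun S r + - a * Ifun S r) with 0 by ring.
    rewrite exp_0; ring. }
  apply (const01 (fun x => Y x * exp (a * Ifun S x))); auto.
  - apply C01_mult; auto. apply (C01_comp (fun x => a * Ifun S x) exp).
    apply C01_mult. apply C01_const. apply C01_Ifun; auto.
    intros; apply (ex_derive_continuous exp); eexists; apply is_derive_exp.
  - intros x Hx. eapply deriv_eq.
    apply (is_derive_mult Y (fun x => exp (a * Ifun S x))). apply HD; auto.
    apply (is_derive_comp exp (fun x => a * Ifun S x)). apply is_derive_exp.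
    apply is_derive_scal. apply Ifun_derive; auto.
    intros; apply Rmult_comm.
    rewrite clamp_id by lra. change (scal ?a ?b) with (a * b).
    change (plus ?a ?b) with (a + b). change (mult ?a ?b) with (a * b). set (e := exp _). set (i := Y x). set (j := S x). clear. generalize e i j; clear; intros; simpl; ring.
Qed.

Lemma sq_eq_pos x y : 0 < x -> 0 < y -> x * x = y * y -> x = y.
Proof. intros. nra. Qed.

Lemma cancel_r a b z : z <> 0 -> a * z = b * z -> a = b.
Proof. intros. apply (Rmult_eq_reg_r z); auto. Qed.

Lemma alg_pq al be p0 q0 p1 q1 k D : 0 < k ->
  0 < al * p0 -> 0 < al * p1 -> 0 < be * q0 -> 0 < be * q1 ->
  p1 - q1 = 2 * k -> p0 - q0 = 2 * k ->
  p1 * q0 = exp (2 * k) * p0 * q1 -> p1 * q1 = exp (- 2 * D) * p0 * q0 ->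
  p0 * (exp (k - D) - 1) = q0 * (exp (- k - D) - 1).
Proof.
  intros Hk a0 a1 b0 b1 e1 e0 F Xr.
  set (A := exp (k - D)). set (B := exp (- k - D)).
  assert (HA : A * A = exp (2 * k) * exp (-2 * D)) by (unfold A; rewrite <- !exp_plus; f_equal; ring).
  assert (HB : B * B * exp (2 * k) = exp (-2 * D)) by (unfold B; rewrite <- !exp_plus; f_equal; ring).
  assert (Apos : 0 < A) by apply exp_pos. assert (Bpos : 0 < B) by apply exp_pos.
  assert (e2pos : 0 < exp (2 * k)) by apply exp_pos.
  assert (nal : al <> 0) by (intro h; rewrite h in a0; lra).
  assert (nbe : be <> 0) by (intro h; rewrite h in b0; lra).
  assert (np0 : p0 <> 0) by (intro h; rewrite h in a0; lra).
  assert (np1 : p1 <> 0) by (intro h; rewrite h in a1; lra).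
  assert (nq0 : q0 <> 0) by (intro h; rewrite h in b0; lra).
  assert (nq1 : q1 <> 0) by (intro h; rewrite h in b1; lra).
  assert (h1 : p1 * p1 = A * A * (p0 * p0)).
  { apply (cancel_r _ _ (q0 * q1)). apply Rmult_integral_contrapositive; tauto.
    transitivity ((p1 * q0) * (p1 * q1)). ring. rewrite F, Xr, HA. ring. }
  assert (h2 : al * p1 = A * (al * p0)).
  { apply sq_eq_pos; auto. apply Rmult_lt_0_compat; auto.
    transitivity (al * al * (p1 * p1)). ring. rewrite h1. ring. }
  assert (h3 : q1 * q1 = B * B * (q0 * q0)).
  { apply (cancel_r _ _ (exp (2 * k) * p0 * p1)).
    apply Rmult_integral_contrapositive; split; auto. apply Rmult_integral_contrapositive; split; auto. lra.
    transitivity ((p1 * q1) * (exp (2 * k) * p0 * q1)). ring. rewrite <- F, Xr, <- HB. ring. }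
  assert (h4 : be * q1 = B * (be * q0)).
  { apply sq_eq_pos; auto. apply Rmult_lt_0_compat; auto.
    transitivity (be * be * (q1 * q1)). ring. rewrite h3. ring. }
  assert (p1 = A * p0) by (apply (Rmult_eq_reg_l al); auto; rewrite h2; ring).
  assert (q1 = B * q0) by (apply (Rmult_eq_reg_l be); auto; rewrite h4; ring).
  subst p1 q1. lra.
Qed.

Lemma neg_contra p0 q0 k D : 0 < k -> k ^ 2 <= D ^ 2 -> 0 < p0 -> q0 < 0 ->
  p0 * (exp (k - D) - 1) = q0 * (exp (- k - D) - 1) -> False.
Proof.
  intros Hk HkD Hp Hq E.
  destruct (Rle_or_lt k D) as [h|h].
  - assert (exp (k - D) <= 1). { destruct (Req_dec (k - D) 0) as [e|e]. rewrite e, exp_0; lra.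
      rewrite <- exp_0. left; apply exp_increasing; lra. }
    assert (exp (- k - D) < 1) by (rewrite <- exp_0; apply exp_increasing; lra).
    nra.
  - assert (D <= - k) by nra.
    assert (1 < exp (k - D)) by (rewrite <- exp_0; apply exp_increasing; lra).
    assert (1 <= exp (- k - D)). { destruct (Req_dec (- k - D) 0) as [e|e]. rewrite e, exp_0; lra.
      rewrite <- exp_0. left; apply exp_increasing; lra. }
    nra.
Qed.

Lemma bnd_contra p0 q0 k D : 0 < k -> k ^ 2 = D ^ 2 -> p0 <> 0 -> q0 <> 0 ->
  p0 * (exp (k - D) - 1) = q0 * (exp (- k - D) - 1) -> False.
Proof.
  intros Hk HkD Hp Hq E.
  assert (D = k \/ D = - k) as [->| ->] by (apply Rsqr_eq; unfold Rsqr; simpl in HkD; nra).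
  - replace (k - k) with 0 in E by ring. rewrite exp_0 in E.
    assert (exp (- k - k) < 1) by (rewrite <- exp_0; apply exp_increasing; lra).
    assert (q0 * (exp (- k - k) - 1) <> 0) by (apply Rmult_integral_contrapositive; split; auto; lra).
    lra.
  - replace (- k - - k) with 0 in E by ring. rewrite exp_0 in E.
    assert (1 < exp (k - - k)) by (rewrite <- exp_0; apply exp_increasing; lra).
    assert (p0 * (exp (k - - k) - 1) <> 0) by (apply Rmult_integral_contrapositive; split; auto; lra).
    lra.
Qed.

Lemma alg_R t0 t1 k S0 S1 sg : 0 < k -> 0 <= t0 -> 0 <= t1 ->
  t0 ^ 2 * (S0 - k) = S0 + k -> t1 ^ 2 * (S1 - k) = S1 + k -> sg * sg = 1 ->
  ((t1 + 1) * (- t0 + 1)) / ((1 - t1) * (1 + t0)) =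
  (sg * S1 + sg * t1 * (S1 - k)) / (sg * S0 + sg * t0 * (S0 - k)).
Proof.
  intros Hk h0 h1 e0 e1 hs.
  assert (n0 : 1 - t0 <> 0) by (intro h; assert (t0 = 1) by lra; subst; lra).
  assert (n1 : 1 - t1 <> 0) by (intro h; assert (t1 = 1) by lra; subst; lra).
  assert (i0 : (1 + t0) * k = - (S0 + t0 * (S0 - k)) * (1 - t0)) by nra.
  assert (i1 : (1 + t1) * k = - (S1 + t1 * (S1 - k)) * (1 - t1)) by nra.
  assert (m0 : S0 + t0 * (S0 - k) <> 0) by (intro h; rewrite h in i0; nra).
  assert (m1 : S1 + t1 * (S1 - k) <> 0) by (intro h; rewrite h in i1; nra).
  assert (sgn : sg <> 0) by (intro h; rewrite h in hs; lra).
  replace (sg * S1 + sg * t1 * (S1 - k)) with (sg * (S1 + t1 * (S1 - k))) by ring.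
  replace (sg * S0 + sg * t0 * (S0 - k)) with (sg * (S0 + t0 * (S0 - k))) by ring.
  assert (e0' : S0 + t0 * (S0 - k) = - (1 + t0) * k / (1 - t0)) by (field_simplify_eq; [nra|auto]).
  assert (e1' : S1 + t1 * (S1 - k) = - (1 + t1) * k / (1 - t1)) by (field_simplify_eq; [nra|auto]).
  rewrite e0', e1'. field. repeat split; auto; lra.
Qed.

Lemma sqrt_1t2_pos t : 0 < sqrt (1 + t ^ 2).
Proof. apply sqrt_lt_R0. nra. Qed.

Lemma alg_pos t0 t1 k D : 0 < k < PI -> atan t1 = atan t0 - k ->
  1 + t1 ^ 2 = (1 + t0 ^ 2) * exp (- 2 * D) ->
  (cos k - exp D) / sin k = - t0.
Proof.
  intros Hk Ha HX.
  assert (Hs : 0 < sin k) by (apply sin_gt_0; lra).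
  assert (s0 := sqrt_1t2_pos t0). assert (s1 := sqrt_1t2_pos t1).
  assert (Hc : cos (atan t1) = cos (atan t0) * cos k + sin (atan t0) * sin k)
    by (rewrite Ha, cos_minus; ring).
  rewrite cos_atan, cos_atan, sin_atan in Hc. unfold Rsqr in Hc.
  replace (t0 * t0) with (t0 ^ 2) in Hc by ring. replace (t1 * t1) with (t1 ^ 2) in Hc by ring.
  assert (Hsq : sqrt (1 + t1 ^ 2) = sqrt (1 + t0 ^ 2) * exp (- D)).
  { rewrite HX. replace (exp (-2 * D)) with (exp (- D) ^ 2) by (simpl; rewrite Rmult_1_r, <- exp_plus; f_equal; ring).
    rewrite sqrt_mult_alt by nra. rewrite sqrt_pow2; auto. left; apply exp_pos. }
  rewrite Hsq in Hc.
  assert (He : exp D * exp (- D) = 1) by (rewrite <- exp_plus; replace (D + - D) with 0 by ring; apply exp_0).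
  assert (Hpos := exp_pos (- D)).
  assert (Hc' : 1 / (sqrt (1 + t0 ^ 2) * exp (- D)) * sqrt (1 + t0 ^ 2) = cos k + t0 * sin k)
    by (rewrite Hc; field; lra).
  replace (1 / (sqrt (1 + t0 ^ 2) * exp (- D)) * sqrt (1 + t0 ^ 2)) with (exp D) in Hc'.
  2:{ field_simplify_eq; [|lra]. lra. }
  rewrite Hc'. field. lra.
Qed.

Lemma exp_ne1 x : x <> 0 -> exp x <> 1.
Proof. intros h e. rewrite <- exp_0 in e. apply exp_inv in e. auto. Qed.

Definition Rneg k D :=
  let s := sqrt (- ((exp (2 * k) - exp (D + k)) / (exp (D + k) - 1))) in
  ((exp k / s + 1) * (- (1 / s) + 1)) / ((1 - exp k / s) * (1 + 1 / s)).

Definition Rpos k D :=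
  let cc := atan ((cos k - exp D) / sin k) in
  let a := cc + k in
  (tan a + sec a) / (tan cc + sec cc).

Lemma ts_atan t : tan (- atan t) + sec (- atan t) = sqrt (1 + t ^ 2) - t.
Proof.
  unfold sec. rewrite tan_neg, cos_neg, tan_atan, cos_atan. unfold Rsqr.
  replace (t * t) with (t ^ 2) by ring. assert (h := sqrt_1t2_pos t). field. lra.
Qed.

Ltac dsolve f H := auto_derive; [repeat split; try (eexists; apply H); auto
   | try change (Derive (fun y => f y)) with (Derive f); rewrite ?(is_derive_unique _ _ _ H) ].

Section Core.
Variables (S : R -> R) (c D : R).
Hypothesis HC : C01 S.
Hypothesis HD : forall x, 0 < x < 1 -> is_derive S x (- S x ^ 2 - c).
Hypothesis HI : is_RInt S 0 1 D.

Definition X r := S r ^ 2 + c.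

Lemma C01_X : C01 X.
Proof. unfold X. apply C01_plus. apply (C01_comp S (fun y => y ^ 2)); auto.
  intros; apply (ex_derive_continuous (fun y => y^2)); auto_derive; auto. apply C01_const. Qed.

Lemma X_deriv x : 0 < x < 1 -> is_derive X x (- 2 * S x * X x).
Proof. intros Hx. unfold X. assert (H := HD x Hx). dsolve S H. ring. Qed.

Lemma X_sol r : 0 <= r <= 1 -> X r = X 0 * exp (- 2 * Ifun S r).
Proof. apply lin_sol; auto. apply C01_X. apply X_deriv. Qed.

Lemma X_1 : X 1 = X 0 * exp (- 2 * D).
Proof. rewrite X_sol by lra. rewrite (Ifun_1 S D); auto. Qed.

Lemma X_pos : 0 < X 0 -> forall r, 0 <= r <= 1 -> 0 < X r.
Proof. intros H r Hr. rewrite X_sol; auto. apply Rmult_lt_0_compat; auto. apply exp_pos. Qed.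
Lemma X_neg : X 0 < 0 -> forall r, 0 <= r <= 1 -> X r < 0.
Proof. intros H r Hr. rewrite X_sol; auto. assert (h := exp_pos (-2 * Ifun S r)). nra. Qed.
Lemma X_zero : X 0 = 0 -> forall r, 0 <= r <= 1 -> X r = 0.
Proof. intros H r Hr. rewrite X_sol; auto. rewrite H; ring. Qed.

Section Neg.
Variable k : R.
Hypothesis Hk : 0 < k.
Hypothesis Hkc : c = - k ^ 2.

Lemma flow_neg (al be : R) :
  (forall r, 0 <= r <= 1 -> 0 < al * (S r + k) /\ 0 < be * (S r - k)) ->
  (S 1 + k) * (S 0 - k) = exp (2 * k) * (S 0 + k) * (S 1 - k).
Proof.
  intros Hp.
  set (F := fun r => ln (al * (S r + k)) - ln (be * (S r - k))).
  assert (Hi : is_RInt (fun _ => 2 * k) 0 1 (F 1 - F 0)).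
  { apply FTC; try lra.
    - unfold F. apply C01_minus.
      + apply (C01_comp (fun r => al * (S r + k)) ln).
        apply C01_mult. apply C01_const. apply C01_plus; auto. apply C01_const.
        intros r Hr; apply continuous_ln, Hp; auto.
      + apply (C01_comp (fun r => be * (S r - k)) ln).
        apply C01_mult. apply C01_const. apply C01_minus; auto. apply C01_const.
        intros r Hr; apply continuous_ln, Hp; auto.
    - apply C01_const.
    - intros x Hx. assert (H := HD x Hx). destruct (Hp x ltac:(lra)) as [h1 h2].
      unfold F. dsolve S H.
      assert (al <> 0 /\ S x + k <> 0) as [n1 n2] by (split; intro h; rewrite h in h1; lra).
      assert (be <> 0 /\ S x + - k <> 0) as [n3 n4] by (split; intro h; [rewrite h in h2| replace (S x - k) with 0 in h2 by lra]; lra).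
      rewrite Hkc. field. tauto. }
  assert (Hc := is_RInt_const 0 1 (2 * k)).
  assert (Hv : F 1 - F 0 = 2 * k).
  { apply (is_RInt_unique (V:=R_CompleteNormedModule)) in Hc.
    apply (is_RInt_unique (V:=R_CompleteNormedModule)) in Hi.
    rewrite <- Hi, Hc. change (scal (1 - 0) (2 * k)) with ((1-0)*(2*k)). ring. }
  unfold F in Hv. destruct (Hp 0 ltac:(lra)) as [a0 b0]. destruct (Hp 1 ltac:(lra)) as [a1 b1].
  assert (Hl : ln (al * (S 1 + k) * (be * (S 0 - k))) = ln (exp (2*k) * (al * (S 0 + k)) * (be * (S 1 - k)))).
  { rewrite (ln_mult _ (be*(S 0 - k))), (ln_mult _ (be*(S 1 - k))), (ln_mult (exp (2*k))), ln_exp; auto; try apply exp_pos; try lra. apply Rmult_lt_0_compat; auto; apply exp_pos. }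
  assert (P1 : 0 < al * (S 1 + k) * (be * (S 0 - k))) by (apply Rmult_lt_0_compat; auto).
  assert (P2 : 0 < exp (2 * k) * (al * (S 0 + k)) * (be * (S 1 - k))) by (apply Rmult_lt_0_compat; auto; apply Rmult_lt_0_compat; auto; apply exp_pos).
  apply ln_inv in Hl; auto.
  assert (al <> 0) by (intro h; rewrite h in a0; lra).
  assert (be <> 0) by (intro h; rewrite h in b0; lra).
  apply (Rmult_eq_reg_l (al * be)). transitivity (al * (S 1 + k) * (be * (S 0 - k))). ring.
  rewrite Hl. ring. apply Rmult_integral_contrapositive; tauto.
Qed.


Lemma pq_X r : X r = (S r + k) * (S r - k).
Proof. unfold X. rewrite Hkc. ring. Qed.

Lemma flow_X (al be : R) :
  (forall r, 0 <= r <= 1 -> 0 < al * (S r + k) /\ 0 < be * (S r - k)) ->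
  (S 0 + k) * (exp (k - D) - 1) = (S 0 - k) * (exp (- k - D) - 1).
Proof.
  intros Hp. destruct (Hp 0 ltac:(lra)). destruct (Hp 1 ltac:(lra)).
  apply (alg_pq al be _ _ (S 1 + k) (S 1 - k)); auto; try ring.
  apply flow_neg with al be; auto.
  replace (exp (-2 * D) * (S 0 + k) * (S 0 - k)) with (X 0 * exp (-2 * D)) by (rewrite pq_X; ring).
  rewrite <- pq_X. apply X_1.
Qed.

Lemma neg_X0_nonneg : - D ^ 2 <= c -> 0 <= X 0.
Proof.
  intros Hb. destruct (Rle_or_lt 0 (X 0)) as [h|h]; auto. exfalso.
  assert (Hn := X_neg h).
  apply (neg_contra (S 0 + k) (S 0 - k) k D); auto.
  - nra.
  - assert (h0 := Hn 0 ltac:(lra)). unfold X in h0. nra.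
  - assert (h0 := Hn 0 ltac:(lra)). unfold X in h0. nra.
  - apply (flow_X 1 (-1)). intros r Hr. assert (h0 := Hn r Hr). unfold X in h0. split; nra.
Qed.

Lemma neg_sign : 0 < X 0 -> exists sg, (sg = 1 \/ sg = -1) /\
  forall r, 0 <= r <= 1 -> k < sg * S r.
Proof.
  intros H0. assert (Hp := X_pos H0).
  assert (Hnz : forall r, 0 <= r <= 1 -> S r <> 0).
  { intros r Hr h. assert (h0 := Hp r Hr). unfold X in h0. rewrite h in h0. nra. }
  assert (Hs := sign01 S HC Hnz).
  destruct (Rlt_or_le 0 (S 0)) as [h|h].
  - exists 1. split; auto. intros r Hr. assert (a := Hs r Hr). assert (b := Hp r Hr). unfold X in b. rewrite Hkc in b.
    assert (0 < S r) by nra. nra.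
  - exists (-1). split; auto. intros r Hr. assert (a := Hs r Hr). assert (b := Hp r Hr). unfold X in b. rewrite Hkc in b.
    assert (S 0 <> 0) by (intro e; rewrite e in a; lra).
    assert (S r < 0) by nra. nra.
Qed.

Lemma neg_bnd_contra : 0 < X 0 -> k ^ 2 = D ^ 2 -> False.
Proof.
  intros H0 Hk2. destruct (neg_sign H0) as [sg [Hsg Hr]].
  apply (bnd_contra (S 0 + k) (S 0 - k) k D); auto.
  - assert (h := Hr 0 ltac:(lra)). intro e. destruct Hsg; subst; nra.
  - assert (h := Hr 0 ltac:(lra)). intro e. destruct Hsg; subst; nra.
  - apply (flow_X sg sg). intros r Hr'. assert (h := Hr r Hr'). destruct Hsg; subst; split; nra.
Qed.


Lemma neg_main : 0 < X 0 -> k ^ 2 <> D ^ 2 ->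
  is_RInt (fun r => sqrt (X r)) 0 1
   (Rabs (ln (Rneg k D))).
Proof.
  intros H0 Hne.
  destruct (neg_sign H0) as [sg [Hsg Hr]].
  assert (Hsg2 : sg * sg = 1) by (destruct Hsg; subst; ring).
  assert (Hpq : forall r, 0 <= r <= 1 -> 0 < sg * (S r + k) /\ 0 < sg * (S r - k)).
  { intros r hr. assert (h := Hr r hr). destruct Hsg; subst; split; nra. }
  assert (key := flow_X sg sg Hpq).
  assert (flow := flow_neg sg sg Hpq).
  destruct (Hpq 0 ltac:(lra)) as [a0 b0]. destruct (Hpq 1 ltac:(lra)) as [a1 b1].
  assert (nDk : D + k <> 0) by (intro e; apply Hne; assert (D = - k) by lra; subst; ring).
  assert (HB1 : exp (- k - D) <> 1) by (apply exp_ne1; lra).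
  assert (HD1 : exp (D + k) <> 1) by (apply exp_ne1; lra).
  assert (eDk := exp_pos (D + k)).
  assert (np0 : S 0 + k <> 0) by (intro e; rewrite e in a0; lra).
  assert (nq0 : S 0 - k <> 0) by (intro e; rewrite e in b0; lra).
  assert (Hcm : - ((exp (2 * k) - exp (D + k)) / (exp (D + k) - 1)) = (S 0 - k) / (S 0 + k)).
  { assert (Hq0 : S 0 - k = (S 0 + k) * (exp (k - D) - 1) / (exp (- k - D) - 1))
      by (rewrite key; field; lra).
    rewrite Hq0.
    replace (exp (2 * k)) with (exp (k - D) * exp (D + k)) by (rewrite <- exp_plus; f_equal; ring).
    replace (exp (- k - D)) with (/ exp (D + k)) by (rewrite <- exp_Ropp; f_equal; ring).
    field. repeat split; auto; try lra. }
  assert (Hqp : 0 < (S 0 - k) / (S 0 + k)).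
  { replace ((S 0 - k) / (S 0 + k)) with ((sg * (S 0 - k)) / (sg * (S 0 + k))) by (field; destruct Hsg; subst; lra).
    apply Rdiv_lt_0_compat; auto. }
  assert (Hpq0 : 0 < (S 0 + k) / (S 0 - k)).
  { replace ((S 0 + k) / (S 0 - k)) with ((sg * (S 0 + k)) / (sg * (S 0 - k))) by (field; destruct Hsg; subst; lra).
    apply Rdiv_lt_0_compat; auto. }
  unfold Rneg. rewrite Hcm.
  set (s := sqrt ((S 0 - k) / (S 0 + k))).
  set (t0 := sqrt ((S 0 + k) / (S 0 - k))).
  assert (spos : 0 < s) by (apply sqrt_lt_R0; auto).
  assert (Hst : t0 * s = 1).
  { unfold t0, s. rewrite <- sqrt_mult_alt by lra. replace ((S 0 + k) / (S 0 - k) * ((S 0 - k) / (S 0 + k))) with 1 by (field; auto).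
    apply sqrt_1. }
  assert (H1s : 1 / s = t0) by (field_simplify_eq; [lra|lra]).
  assert (HEs : exp k / s = exp k * t0) by (rewrite <- H1s; field; lra).
  rewrite H1s, HEs.
  set (t1 := exp k * t0).
  assert (t0pos : 0 <= t0) by apply sqrt_pos.
  assert (t1pos : 0 <= t1) by (apply Rmult_le_pos; [left; apply exp_pos|auto]).
  assert (Ht0 : t0 ^ 2 = (S 0 + k) / (S 0 - k)) by (unfold t0; apply pow2_sqrt; lra).
  assert (e0 : t0 ^ 2 * (S 0 - k) = S 0 + k) by (rewrite Ht0; field; auto).
  assert (nq1 : S 1 - k <> 0) by (intro e; rewrite e in b1; lra).
  assert (e1 : t1 ^ 2 * (S 1 - k) = S 1 + k).
  { unfold t1. replace ((exp k * t0) ^ 2) with (exp (2 * k) * t0 ^ 2) by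
      (replace (2 * k) with (k + k) by ring; rewrite exp_plus; ring).
    rewrite Ht0. apply (Rmult_eq_reg_r (S 0 - k)); auto.
    transitivity (exp (2 * k) * (S 0 + k) * (S 1 - k)). field; auto. rewrite <- flow. ring. }
  rewrite (alg_R t0 t1 k (S 0) (S 1) sg); auto.
  assert (Hsq : forall r t, 0 <= r <= 1 -> 0 <= t -> t ^ 2 * (S r - k) = S r + k ->
     sqrt (X r) = sg * t * (S r - k)).
  { intros r t hr ht et. rewrite pq_X.
    replace ((S r + k) * (S r - k)) with ((sg * t * (S r - k)) ^ 2).
    apply sqrt_pow2. destruct (Hpq r hr). replace (sg * t * (S r - k)) with (t * (sg * (S r - k))) by ring.
    apply Rmult_le_pos; lra.
    rewrite <- et. replace ((sg * t * (S r - k)) ^ 2) with ((sg * sg) * t ^ 2 * (S r - k) * (S r - k)) by ring.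
    rewrite Hsg2. ring. }
  rewrite <- (Hsq 0 t0), <- (Hsq 1 t1); auto; try lra.
  set (G := fun r => ln (sg * S r + sqrt (X r))).
  assert (Wpos : forall r, 0 <= r <= 1 -> 0 < sg * S r + sqrt (X r)).
  { intros r hr. assert (h := Hr r hr). assert (sqrt (X r) >= 0) by (apply Rle_ge, sqrt_pos). lra. }
  rewrite ln_div by (apply Wpos; lra).
  assert (Hi : is_RInt (fun r => sqrt (X r)) 0 1 (- sg * G 1 - - sg * G 0)).
  { apply (FTC (fun r => - sg * G r)); try lra.
    - apply C01_mult. apply C01_const. unfold G.
      apply (C01_comp (fun r => sg * S r + sqrt (X r)) ln).
      apply C01_plus. apply C01_mult; auto. apply C01_const.
      apply (C01_comp X sqrt). apply C01_X; auto. intros; apply continuous_sqrt.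
      intros r hr; apply continuous_ln, Wpos; auto.
    - apply (C01_comp X sqrt). apply C01_X; auto. intros; apply continuous_sqrt.
    - intros x Hx. assert (H := HD x Hx). assert (hX := X_pos H0 x ltac:(lra)).
      assert (hW := Wpos x ltac:(lra)). unfold G, X in *.
      replace (S x ^ 2) with (S x * (S x * 1)) in * by ring.
      auto_derive.
      + repeat split; try (eexists; apply H); auto.
      + change (Derive (fun y => S y)) with (Derive S). rewrite (is_derive_unique _ _ _ H).
        set (q := sqrt (S x * (S x * 1) + c)) in *.
        assert (qpos : 0 < q) by (apply sqrt_lt_R0; auto).
        assert (Hq : q * q = S x * (S x * 1) + c) by (apply sqrt_sqrt; lra).
        replace (- (S x * (S x * 1)) - c) with (- (q * q)) by lra.
        destruct Hsg; subst sg. field; lra. field; lra. }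
  assert (Hv : 0 <= - sg * G 1 - - sg * G 0).
  { apply (is_RInt_ge_0 _ 0 1 _ ltac:(lra) Hi). intros; apply sqrt_pos. }
  replace (Rabs (ln (sg * S 1 + sqrt (X 1)) - ln (sg * S 0 + sqrt (X 0)))) with (- sg * G 1 - - sg * G 0); auto.
  unfold G in *. destruct Hsg; subst sg.
  - rewrite Rabs_left1; lra.
  - rewrite Rabs_right; lra.
Qed.
End Neg.

Lemma zero_case : X 0 = 0 -> D = S 0 /\ is_RInt (fun r => sqrt (X r)) 0 1 0.
Proof.
  intros H0. assert (Hz := X_zero H0).
  assert (Hc : forall r, 0 <= r <= 1 -> S r = S 0).
  { apply const01; auto. intros x Hx. assert (h := HD x Hx).
    replace 0 with (- S x ^ 2 - c); auto. assert (h' := Hz x ltac:(lra)). unfold X in h'. lra. }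
  split.
  - assert (h := is_RInt_const 0 1 (S 0)).
    apply (is_RInt_ext _ S) in h.
    2:{ intros x Hx. rewrite Rmin_left, Rmax_right in Hx by lra. symmetry; apply Hc; lra. }
    assert (e := is_RInt_unique (V:=R_CompleteNormedModule) _ _ _ _ h).
    rewrite (is_RInt_unique (V:=R_CompleteNormedModule) _ _ _ _ HI) in e.
    rewrite e. change (scal (1 - 0) (S 0)) with ((1 - 0) * S 0). ring.
  - assert (h := is_RInt_const 0 1 0).
    change (scal (1 - 0) 0) with ((1 - 0) * 0) in h. replace ((1 - 0) * 0) with 0 in h by ring.
    apply (is_RInt_ext (fun _ => 0)); auto.
    intros x Hx. rewrite Rmin_left, Rmax_right in Hx by lra. rewrite Hz by lra. symmetry; apply sqrt_0.
Qed.

Lemma lam0_case : c = 0 -> 0 < X 0 -> is_RInt (fun r => sqrt (X r)) 0 1 (Rabs D).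
Proof.
  intros Hc0 H0. assert (Hp := X_pos H0).
  assert (Hnz : forall r, 0 <= r <= 1 -> S r <> 0).
  { intros r Hr h. assert (h0 := Hp r Hr). unfold X in h0. rewrite h, Hc0 in h0. lra. }
  assert (Hs := sign01 S HC Hnz).
  assert (exists sg, (sg = 1 \/ sg = -1) /\ forall r, 0 <= r <= 1 -> 0 < sg * S r) as [sg [Hsg Hr]].
  { destruct (Rlt_or_le 0 (S 0)) as [h|h].
    - exists 1; split; auto. intros r Hr. assert (a := Hs r Hr). nra.
    - exists (-1); split; auto. intros r Hr. assert (a := Hs r Hr).
      assert (S 0 <> 0) by (apply Hnz; lra). nra. }
  assert (Hi : is_RInt (fun r => sqrt (X r)) 0 1 (sg * D)).
  { apply (is_RInt_ext (fun r => sg * S r)).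
    - intros x Hx. rewrite Rmin_left, Rmax_right in Hx by lra. unfold X. rewrite Hc0, Rplus_0_r.
      replace (S x ^ 2) with ((sg * S x) ^ 2) by (destruct Hsg; subst; ring).
      rewrite sqrt_pow2; auto. left; apply Hr; lra.
    - apply (is_RInt_scal S 0 1 sg D HI). }
  assert (Hv : 0 <= sg * D) by (apply (is_RInt_ge_0 _ 0 1 _ ltac:(lra) Hi); intros; apply sqrt_pos).
  replace (Rabs D) with (sg * D); auto.
  destruct Hsg; subst. rewrite Rabs_right; lra. rewrite Rabs_left1; lra.
Qed.

Lemma pos_case k : 0 < k < PI -> c = k ^ 2 ->
  is_RInt (fun r => sqrt (X r)) 0 1 (Rabs (ln (Rpos k D))).
Proof.
  intros Hk Hkc.
  assert (Xp : forall r, 0 < X r) by (intros; unfold X; rewrite Hkc; nra).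
  assert (Hfl : forall r, 0 <= r <= 1 -> atan (S r / k) + k * r = atan (S 0 / k) + k * 0).
  { apply (const01 (fun r => atan (S r / k) + k * r)).
    - apply C01_plus. apply (C01_comp (fun r => S r / k) atan).
      apply C01_mult; auto. apply C01_const.
      intros; apply (ex_derive_continuous atan); eexists; apply is_derive_atan.
      apply C01_mult. apply C01_const. intros x. apply continuous_clamp.
    - intros x Hx. assert (H := HD x Hx). auto_derive.
      + eexists; apply H.
      + change (Derive (fun y => S y)) with (Derive S). rewrite (is_derive_unique _ _ _ H).
        rewrite Hkc. field. split; [lra|nra]. }
  assert (Hf1 := Hfl 1 ltac:(lra)). rewrite Rmult_0_r, Rplus_0_r, Rmult_1_r in Hf1.
  set (t0 := S 0 / k). set (t1 := S 1 / k).
  assert (HX1 : 1 + t1 ^ 2 = (1 + t0 ^ 2) * exp (- 2 * D)).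
  { assert (h := X_1). unfold X in h. rewrite Hkc in h. unfold t0, t1.
    apply (Rmult_eq_reg_l (k ^ 2)). 2:{ apply pow_nonzero; lra. }
    transitivity (S 1 ^ 2 + k ^ 2). field; lra. rewrite h. field; lra. }
  assert (Ha := alg_pos t0 t1 k D Hk ltac:(unfold t0, t1; lra) HX1).
  unfold Rpos. rewrite Ha. rewrite atan_opp.
  replace (- atan t0 + k) with (- atan t1) by (unfold t0, t1; lra).
  rewrite !ts_atan.
  set (G := fun r => ln (sqrt (1 + (S r / k) ^ 2) - S r / k)).
  assert (Wpos : forall t, 0 < sqrt (1 + t ^ 2) - t).
  { intros t. assert (h := sqrt_1t2_pos t). destruct (Rle_or_lt t 0). lra.
    assert (t < sqrt (1 + t ^ 2)); [|lra].
    rewrite <- (sqrt_pow2 t) at 1 by lra. apply sqrt_lt_1; nra. }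
  rewrite ln_div by apply Wpos.
  assert (Hi : is_RInt (fun r => sqrt (X r)) 0 1 (G 1 - G 0)).
  { apply (is_RInt_ext (fun r => k * sqrt (1 + (S r / k) ^ 2))).
    - intros x _. unfold X. rewrite Hkc.
      replace (S x ^ 2 + k ^ 2) with (k ^ 2 * (1 + (S x / k) ^ 2)) by (field; lra).
      rewrite sqrt_mult_alt by (apply pow2_ge_0). rewrite sqrt_pow2 by lra. reflexivity.
    - apply FTC; try lra.
      + unfold G. apply (C01_comp (fun r => sqrt (1 + (S r / k) ^ 2) - S r / k) ln).
        apply C01_minus. apply (C01_comp (fun r => 1 + (S r / k) ^ 2) sqrt).
        apply C01_plus. apply C01_const. apply (C01_comp (fun r => S r / k) (fun y => y ^ 2)).
        apply C01_mult; auto. apply C01_const.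
        intros; apply (ex_derive_continuous (fun y => y ^ 2)); auto_derive; auto.
        intros; apply continuous_sqrt. apply C01_mult; auto. apply C01_const.
        intros r _; apply continuous_ln, Wpos.
      + apply C01_mult. apply C01_const. apply (C01_comp (fun r => 1 + (S r / k) ^ 2) sqrt).
        apply C01_plus. apply C01_const. apply (C01_comp (fun r => S r / k) (fun y => y ^ 2)).
        apply C01_mult; auto. apply C01_const.
        intros; apply (ex_derive_continuous (fun y => y ^ 2)); auto_derive; auto.
        intros; apply continuous_sqrt.
      + intros x Hx. assert (H := HD x Hx). assert (hW := Wpos (S x / k)). unfold G.
        auto_derive.
        * repeat split; try (eexists; apply H); auto; try nra;
          try (replace (S x * / k * (S x * / k * 1)) with ((S x / k) ^ 2) by (unfold Rdiv; ring);
          unfold Rdiv in hW; lra).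
        * change (Derive (fun y => S y)) with (Derive S). rewrite (is_derive_unique _ _ _ H).
          replace (S x * / k * (S x * / k * 1)) with ((S x / k) ^ 2) by (unfold Rdiv; ring).
          set (q := sqrt (1 + (S x / k) ^ 2)) in *.
          assert (qpos : 0 < q) by apply sqrt_1t2_pos.
          assert (Hq : q * q = 1 + (S x / k) ^ 2) by (apply sqrt_sqrt; nra).
          replace (- S x ^ 2 - c) with (- (k ^ 2) * (q * q)) by (rewrite Hq, Hkc; field; lra).
          assert (ee : q * k + - S x = k * (q - S x / k)) by (field; lra).
          assert (0 < k * (q - S x / k)) by (apply Rmult_lt_0_compat; lra).
          field. split; [|split]; lra. }
  assert (Hv : 0 <= G 1 - G 0) by (apply (is_RInt_ge_0 _ 0 1 _ ltac:(lra) Hi); intros; apply sqrt_pos).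
  unfold G in *. fold t0 t1 in Hi, Hv. rewrite Rabs_right; auto. lra.
Qed.
End Core.

Lemma core d D lam S : 0 < INR d -> - D ^ 2 / INR d <= lam -> lam < PI ^ 2 / INR d ->
  C01 S -> (forall x, 0 < x < 1 -> is_derive S x (- S x ^ 2 - INR d * lam)) ->
  is_RInt S 0 1 D ->
  0 <= X S (INR d * lam) 0 /\ is_RInt (fun r => sqrt (X S (INR d * lam) r)) 0 1 (mfun d D lam).
Proof.
  intros Hd Hb Hu HC HD HI.
  assert (Hb' : - D ^ 2 <= INR d * lam).
  { apply (Rmult_le_compat_l (INR d)) in Hb; [|lra]. replace (INR d * (- D ^ 2 / INR d)) with (- D ^ 2) in Hb by (field; lra). auto. }
  assert (Hu' : INR d * lam < PI ^ 2).
  { apply (Rmult_lt_compat_l (INR d)) in Hu; [|lra]. replace (INR d * (PI ^ 2 / INR d)) with (PI ^ 2) in Hu by (field; lra). auto. }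
  set (c := INR d * lam) in *.
  unfold mfun. destruct (Rlt_dec lam 0) as [Hl|Hl].
  - assert (cneg : c < 0) by (unfold c; nra).
    set (k := sqrt (- c)).
    assert (Hk : 0 < k) by (apply sqrt_lt_R0; lra).
    assert (Hkc : c = - k ^ 2) by (unfold k; rewrite pow2_sqrt; lra).
    assert (HX0 := neg_X0_nonneg S c D HC HD HI k Hk Hkc Hb').
    split; auto.
    destruct (Req_EM_T lam (- D ^ 2 / INR d)) as [Heq|Hne].
    + destruct HX0 as [HX0|HX0].
      * exfalso. apply (neg_bnd_contra S c D HC HD HI k Hk Hkc HX0).
        assert (c = - D ^ 2) by (unfold c; rewrite Heq; field; lra). lra.
      * symmetry in HX0. apply (zero_case S c D HC HD HI HX0).
    + destruct HX0 as [HX0|HX0].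
      * assert (Hne' : k ^ 2 <> D ^ 2).
        { intro e. apply Hne. apply (Rmult_eq_reg_l (INR d)); [|lra]. fold c. rewrite Hkc, e. field. lra. }
        assert (H := neg_main S c D HC HD HI k Hk Hkc HX0 Hne').
        unfold Rneg, Defs.Cminus in *. replace (INR d * - lam) with (- c) by (unfold c; ring).
        fold k. exact H.
      * exfalso. symmetry in HX0. destruct (zero_case S c D HC HD HI HX0) as [e _].
        unfold X in HX0. rewrite <- e in HX0. apply Hne.
        apply (Rmult_eq_reg_l (INR d)); [|lra]. fold c. field_simplify; lra.
  - destruct (Req_EM_T lam 0) as [H0|H0].
    + assert (c0 : c = 0) by (unfold c; rewrite H0; ring).
      assert (HX0 : 0 <= X S c 0) by (unfold X; rewrite c0; nra).
      split; auto.
      destruct HX0 as [HX0|HX0].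
      * apply lam0_case; auto.
      * symmetry in HX0. destruct (zero_case S c D HC HD HI HX0) as [e Hi].
        unfold X in HX0. rewrite c0, <- e in HX0. assert (HS0 : S 0 = 0) by nra.
        rewrite e, HS0, Rabs_R0. exact Hi.
    + assert (cpos : 0 < c) by (unfold c; assert (0 < lam) by lra; nra).
      set (k := sqrt c).
      assert (Hk : 0 < k < PI).
      { split. apply sqrt_lt_R0; lra. unfold k. rewrite <- (sqrt_pow2 PI) by (left; apply PI_RGT_0).
        apply sqrt_lt_1; lra. }
      assert (Hkc : c = k ^ 2) by (unfold k; rewrite pow2_sqrt; lra).
      split. unfold X; nra.
      assert (H := pos_case S c D HC HD HI k Hk Hkc).
      unfold Rpos, Defs.Cplus in *. fold k. exact H.
Qed.

Theorem lemma3p4 (d : nat) (Dv : nat -> R) (lam : R) (L : nat -> R -> R) :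
  (2 <= d)%nat ->
  - (rsum d Dv) ^ 2 / INR d <= lam ->
  lam < PI ^ 2 / INR d ->
  (forall i, (i < d)%nat -> forall r, 0 <= r <= 1 ->
     filterlim (L i) (within (fun x => 0 <= x <= 1) (locally r)) (locally (L i r))) ->
  (forall i, (i < d)%nat -> forall r, 0 < r < 1 ->
     is_derive (L i) r (- (rsum d (fun k => L k r)) * L i r - lam)) ->
  (forall i, (i < d)%nat -> is_RInt (L i) 0 1 (Dv i)) ->
  ((INR d - 1) * lam
     = rsum d (fun i => (L i 0) ^ 2) - (rsum d (fun i => L i 0)) ^ 2
   <->
   mfun d (rsum d Dv) lam
     = sqrt (INR d / (INR d - 1)
             * rsum d (fun i => (Dv i - rsum d Dv / INR d) ^ 2))).
Proof.
  intros Hd2 Hb Hu Hcont Hder Hint.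
  assert (Hd : 2 <= INR d) by (replace 2 with (INR 2) by (simpl; ring); apply le_INR; auto).
  set (D := rsum d Dv) in *.
  assert (CL : forall i, (i < d)%nat -> C01 (L i)) by (intros; apply C01_of_within; auto).
  set (S := fun r => rsum d (fun k => L k r)).
  assert (CS : C01 S) by (apply C01_rsum; auto).
  assert (HDS : forall x, 0 < x < 1 -> is_derive S x (- S x ^ 2 - INR d * lam)).
  { intros x Hx. eapply deriv_eq. apply (is_derive_rsum d L (fun i => - S x * L i x - lam)).
    intros i Hi; apply Hder; auto.
    rewrite (rsum_ext _ _ (fun i => (- S x) * L i x + - lam)) by (intros; ring).
    rewrite rsum_plus, rsum_scal, rsum_const. fold (S x). ring. }
  assert (HIS : is_RInt S 0 1 D) by (apply is_RInt_rsum; auto).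
  destruct (core d D lam S ltac:(lra) Hb Hu CS HDS HIS) as [HX0 HIm].
  set (c := INR d * lam) in *.
  set (E := fun r => exp (- 1 * Ifun S r)).
  assert (Epos : forall r, 0 < E r) by (intros; apply exp_pos).
  assert (Econt : forall x, continuous E x).
  { intros x. apply (ex_derive_continuous E). unfold E. eexists.
    apply (is_derive_comp exp (fun r => -1 * Ifun S r)). apply is_derive_exp.
    apply is_derive_scal. apply Ifun_derive; auto. }
  set (Phi := RInt E 0 1).
  assert (HPhi : is_RInt E 0 1 Phi).
  { apply (RInt_correct (V:=R_CompleteNormedModule)).
    apply (ex_RInt_continuous (V:=R_CompleteNormedModule)); intros; apply Econt. }
  assert (Phipos : 0 < Phi).
  { assert (h := RInt_lt (fun _ => 0) E 0 1 ltac:(lra) (fun x _ => Econt x)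
      (fun x _ => continuous_const 0 x) (fun x _ => Epos x)).
    rewrite RInt_const in h. change (scal (1 - 0) 0) with ((1 - 0) * 0) in h. unfold Phi. lra. }
  assert (HXs : forall r, 0 <= r <= 1 -> sqrt (X S c r) = sqrt (X S c 0) * E r).
  { intros r Hr. rewrite (X_sol S c CS HDS r Hr).
    replace (exp (-2 * Ifun S r)) with (E r ^ 2) by (unfold E; simpl; rewrite Rmult_1_r, <- exp_plus; f_equal; ring).
    rewrite sqrt_mult_alt by auto. rewrite sqrt_pow2; auto. left; auto. }
  assert (Hm : mfun d D lam = sqrt (X S c 0) * Phi).
  { apply (is_RInt_unique (V:=R_CompleteNormedModule)) in HIm.
    rewrite <- HIm. apply (is_RInt_unique (V:=R_CompleteNormedModule)).
    apply (is_RInt_ext (fun r => sqrt (X S c 0) * E r)).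
    intros x Hx. rewrite Rmin_left, Rmax_right in Hx by lra. rewrite (HXs x); [reflexivity|lra].
    apply (is_RInt_scal E 0 1 _ _ HPhi). }
  set (v := fun i r => L i r - S r / INR d).
  assert (Hv : forall i, (i < d)%nat -> Dv i - D / INR d = v i 0 * Phi).
  { intros i Hi.
    assert (h1 : is_RInt (v i) 0 1 (Dv i - D / INR d)).
    { unfold v. apply (is_RInt_minus (L i) (fun r => S r / INR d)). auto.
      apply (is_RInt_ext (fun r => scal (/ INR d) (S r))).
      intros; change (scal (/ INR d) (S x)) with (/ INR d * S x). unfold Rdiv; apply Rmult_comm.
      replace (D / INR d) with (scal (/ INR d) D) by (change (scal (/ INR d) D) with (/ INR d * D); unfold Rdiv; apply Rmult_comm).
      apply (is_RInt_scal S 0 1 (/ INR d) D HIS). }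
    assert (h2 : is_RInt (v i) 0 1 (v i 0 * Phi)).
    { apply (is_RInt_ext (fun r => v i 0 * E r)).
      - intros x Hx. rewrite Rmin_left, Rmax_right in Hx by lra. symmetry.
        apply (lin_sol S (v i) 1); auto; try lra.
        + unfold v. apply C01_minus. auto. apply C01_mult; auto. apply C01_const.
        + intros y Hy. unfold v. assert (H1 := Hder i Hi y Hy). assert (H2 := HDS y Hy).
          fold (S y) in H1. auto_derive.
          * split; [eexists; apply H1|split; [eexists; apply H2|auto]].
          * change (Derive (fun x => L i x)) with (Derive (L i)).
            change (Derive (fun x => S x)) with (Derive S).
            rewrite (is_derive_unique _ _ _ H1), (is_derive_unique _ _ _ H2). unfold c. field. lra.
      - apply (is_RInt_scal E 0 1 _ _ HPhi). }
    apply (is_RInt_unique (V:=R_CompleteNormedModule)) in h1.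
    apply (is_RInt_unique (V:=R_CompleteNormedModule)) in h2. congruence. }
  set (Q := rsum d (fun i => v i 0 ^ 2)).
  assert (HQ0 : 0 <= Q) by (apply rsum_nonneg; intros; apply pow2_ge_0).
  assert (HQ : rsum d (fun i => L i 0 ^ 2) = Q + S 0 ^ 2 / INR d).
  { unfold Q, v.
    rewrite (rsum_ext d (fun i => (L i 0 - S 0 / INR d) ^ 2) (fun i => L i 0 ^ 2 + (- 2 * (S 0 / INR d) * L i 0 + (S 0 / INR d) ^ 2)))
      by (intros; ring).
    rewrite !rsum_plus, rsum_scal, rsum_const. fold (S 0). field. lra. }
  assert (HR : rsum d (fun i => (Dv i - D / INR d) ^ 2) = Phi ^ 2 * Q).
  { unfold Q. rewrite <- rsum_scal. apply rsum_ext. intros i Hi. rewrite Hv; auto. ring. }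
  fold (S 0). rewrite HQ, HR, Hm.
  unfold X in *. fold c in HX0.
  split; intros H.
  - assert (Q = (INR d - 1) / INR d * (S 0 ^ 2 + c)).
    { unfold c. apply (Rmult_eq_reg_l (INR d)); [|lra]. field_simplify; [|lra]. 
      assert (H' : INR d * ((INR d - 1) * lam) = INR d * (Q + S 0 ^ 2 / INR d - S 0 ^ 2)) by (rewrite H; auto).
      replace (INR d * (Q + S 0 ^ 2 / INR d - S 0 ^ 2)) with (INR d * Q + S 0 ^ 2 - INR d * S 0 ^ 2) in H' by (field; lra).
      nra. }
    replace (INR d / (INR d - 1) * (Phi ^ 2 * Q)) with ((sqrt (S 0 ^ 2 + c) * Phi) ^ 2).
    rewrite sqrt_pow2; auto. apply Rmult_le_pos; [apply sqrt_pos|lra].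
    rewrite H0. rewrite Rpow_mult_distr, pow2_sqrt by auto. field. lra.
  - assert (h : (sqrt (S 0 ^ 2 + c) * Phi) ^ 2 = INR d / (INR d - 1) * (Phi ^ 2 * Q)).
    { rewrite H. apply pow2_sqrt. apply Rmult_le_pos. apply Rdiv_le_0_compat; lra. nra. }
    rewrite Rpow_mult_distr, pow2_sqrt in h by auto.
    assert (h' : S 0 ^ 2 + c = INR d / (INR d - 1) * Q).
    { apply (Rmult_eq_reg_r (Phi ^ 2)). rewrite h. ring. apply pow_nonzero; lra. }
    unfold c in h'. apply (Rmult_eq_reg_l (INR d)); [|lra].
    replace Q with ((INR d - 1) / INR d * (S 0 ^ 2 + INR d * lam)) by (rewrite h'; field; lra).
    field. lra.
Qed.
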